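(* Let $J=p\ge1$, $\sigma_\varepsilon^2>0$, $\sigma_\gamma^2>0$, $0\le\rho\le1$, and let $\mathbf{\Sigma}_\gamma$ be the autoregressive covariance matrix with entries $(\mathbf{\Sigma}_\gamma)_{jj'}=\sigma_\gamma^2\rho^{|j-j'|}$. Let $\mathbf{A}_{\bm\beta}$ be a nonsingular $J\times J$ matrix and $I>0$. For an approximate design $\xi=(I_1,\dots,I_J)$ (reals $I_j\ge0$ with $\sum_jI_j=I$) let $$\mathbf{M}_{\bm\beta}(\xi)=\mathbf{A}_{\bm\beta}^{\mathrm T}\mathbf{M}_0(\xi)^{1/2}\big(\sigma_\varepsilon^2\mathbf{I}_J+\mathbf{M}_0(\xi)^{1/2}\mathbf{\Sigma}_\gamma\mathbf{M}_0(\xi)^{1/2}\big)^{-1}\mathbf{M}_0(\xi)^{1/2}\mathbf{A}_{\bm\beta},\quad \mathbf{M}_0(\xi)^{1/2}=\mathrm{diag}(\sqrt{I_1},\dots,\sqrt{I_J}).$$ Then the $D$-optimal approximate design $\xi^*=(I_1^*,\dots,I_J^* )$ is symmetric in time, i.e. $I_j^*=I_{J-j+1}^*$ for all $j=1,\dots,J$.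
   Context: $\mathbf{A}_{\bm\beta}$ is the Jacobian of the mean response curve at a fixed parameter $\bm\beta$. $\bm\beta$ is estimable under $\xi$ if $\mathbf{A}_{\bm\beta}$ has full column rank and its columns lie in the column space of $\mathrm{diag}(I_1,\dots,I_J)$. A design $\xi^*$ is $D$-optimal if $\log\det\mathbf{M}_{\bm\beta}(\xi^* )\ge\log\det\mathbf{M}_{\bm\beta}(\xi)$ for all approximate designs $\xi$ with total $I$ under which $\bm\beta$ is estimable. *)

(* Defs.v *)
From HB Require Import structures.
From mathcomp Require Import all_boot all_order all_algebra.
From mathcomp Require Import all_classical all_reals all_analysis.
Set Implicit Arguments. Unset Strict Implicit. Unset Printing Implicit Defensive.
Import Order.TTheory GRing.Theory Num.Theory.
Local Open Scope ring_scope.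

Section Design.
Variables (R : realType) (J : nat).

Definition Sigma_gamma (sg2 rho : R) : 'M[R]_J :=
  \matrix_(i < J, k < J) (sg2 * rho ^+ (maxn i k - minn i k)%N).

Definition is_design (I : R) (xi : 'I_J -> R) : Prop :=
  (forall j, 0 <= xi j) /\ \sum_(j < J) xi j = I.

Definition M0 (xi : 'I_J -> R) : 'M[R]_J := diag_mx (\row_j xi j).
Definition M0half (xi : 'I_J -> R) : 'M[R]_J := diag_mx (\row_j Num.sqrt (xi j)).

Definition Minfo (A : 'M[R]_J) (se2 sg2 rho : R) (xi : 'I_J -> R) : 'M[R]_J :=
  A^T *m M0half xi
      *m invmx (se2%:M + M0half xi *m Sigma_gamma sg2 rho *m M0half xi)
      *m M0half xi *m A.

Definition estimable (A : 'M[R]_J) (xi : 'I_J -> R) : Prop :=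
  \rank A = J /\ (A^T <= (M0 xi)^T)%MS.

Definition D_optimal (A : 'M[R]_J) (se2 sg2 rho I : R) (xi : 'I_J -> R) : Prop :=
  [/\ is_design I xi, estimable A xi &
      forall xi' : 'I_J -> R, is_design I xi' -> estimable A xi' ->
        ln (\det (Minfo A se2 sg2 rho xi')) <= ln (\det (Minfo A se2 sg2 rho xi))].

End Design.

(* Main.v *)
Require Import Defs.
From HB Require Import structures.
From mathcomp Require Import all_boot all_order all_algebra.
From mathcomp Require Import all_classical all_reals all_analysis.
From mathcomp Require Import ring lra zify.
From mathcomp Require Import fingroup perm.
Import Order.TTheory GRing.Theory Num.Theory.
Local Open Scope ring_scope.
Set Implicit Arguments. Unset Strict Implicit. Unset Printing Implicit Defensive.
Section PSD.
Variable R : realFieldType.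

Definition psd n (M : 'M[R]_n) :=
  M^T = M /\ forall u : 'rV[R]_n, 0 <= (u *m M *m u^T) 0 0.

Lemma quad_block n (a : 'M[R]_1) (b : 'M[R]_(1, n)) (D : 'M[R]_n) t (v : 'rV[R]_n) :
  (row_mx (t%:M : 'M[R]_1) v *m block_mx a b b^T D *m (row_mx (t%:M : 'M[R]_1) v)^T) 0 0
  = t * t * a 0 0 + 2%:R * t * (b *m v^T) 0 0 + (v *m D *m v^T) 0 0.
Proof.
rewrite mul_row_block tr_row_mx mul_row_col tr_scalar_mx.
rewrite !mulmxDl !mul_scalar_mx !mul_mx_scalar -!scalemxAl.
have -> : v *m b^T = (b *m v^T)^T by rewrite trmx_mul trmxK.
rewrite !mxE [in X in _ = X]mulr2n. rewrite /= .
lra.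
Qed.
Lemma psd_det_ge0 n (M : 'M[R]_n) : psd M -> 0 <= \det M.
Proof.
elim: n M => [|n IH] M; first by rewrite det_mx00.
move: M; rewrite -[n.+1]/(1 + n)%N => M [Msym Mpos].
rewrite -(submxK M) in Msym Mpos *.
set a := ulsubmx M; set b := ursubmx M; set c := dlsubmx M; set D := drsubmx M.
move: Msym; rewrite tr_block_mx => /eq_block_mx [_ _ Hc HD].
rewrite -Hc in Mpos *.
have Q := fun t v => quad_block a b D t v.
have a0 : 0 <= a 0 0.
  have := Mpos (row_mx 1%:M 0); rewrite Q trmx0 !mulmx0 !mxE /= => H.
  lra.
have [agt0|] := ltrP 0 (a 0 0); last first.
  move=> ale0; have aeq0 : a 0 0 = 0 by apply/le_anti; rewrite ale0 a0.
  have b0 : b = 0.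
    apply/matrixP => i j; rewrite [i]ord1 [RHS]mxE.
    set v := delta_mx 0 j : 'rV[R]_n.
    have Hbv : (b *m v^T) 0 0 = b 0 j.
      by rewrite trmx_delta -colE mxE.
    set g := (v *m D *m v^T) 0 0.
    have Hg : 0 <= g by have := Mpos (row_mx 0%:M v); rewrite Q aeq0 Hbv !(mul0r, mulr0, add0r).
    have H1 := Mpos (row_mx (- (g + 1) / (2%:R * b 0 j))%:M v); rewrite Q aeq0 Hbv -/g in H1.
    apply/eqP; apply: contraT => bne0.
    have : 2%:R * (- (g + 1) / (2%:R * b 0 j)) * b 0 j = - (g + 1).
      by field.
    lra.
  by rewrite b0 det_lblock det_mx11 aeq0 mul0r.
have Hc2 : c = b^T by rewrite /c -Hc.
rewrite Hc2.
set al := a 0 0.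
set D' := D - al^-1 *: (b^T *m b).
pose E : 'M[R]_(1 + n) := block_mx 1%:M 0 (- al^-1 *: b^T) 1%:M.
have EM : E *m block_mx a b b^T D = block_mx a b 0 D'.
  rewrite mulmx_block !mul1mx !mul0mx !addr0.
  congr block_mx.
    rewrite [a]mx11_scalar -/al mul_mx_scalar scalerA mulrN divff ?gt_eqF //.
    by rewrite scaleN1r addNr.
  by rewrite -scalemxAl scaleNr addrC.
have detE : \det E = 1 by rewrite det_lblock !det1 mulr1.
have -> : \det (block_mx a b b^T D) = al * \det D'.
  by rewrite -[LHS]mul1r -detE -det_mulmx EM det_ublock det_mx11.
apply: mulr_ge0 => //; apply: IH; split.
  by rewrite /D' linearB /= HD linearZ /= trmx_mul trmxK.
move=> v.
have := Mpos (row_mx (- al^-1 * (b *m v^T) 0 0)%:M v); rewrite Q -/al.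
have -> : (v *m D' *m v^T) 0 0 = (v *m D *m v^T) 0 0 - al^-1 * ((b *m v^T) 0 0) ^+ 2.
  rewrite /D' mulmxBr mulmxBl -scalemxAr -scalemxAl [LHS]mxE.
  congr (_ + _); rewrite mxE mxE; congr (- (_ * _)).
  rewrite mulmxA -(mulmxA (v *m b^T)) mxE big_ord1 expr2; congr (_ * _).
  by rewrite -(trmxK (v *m b^T)) trmx_mul trmxK mxE.
set beta := (b *m v^T) 0 0; set g := (v *m D *m v^T) 0 0.
move=> H; have : - al^-1 * beta * (- al^-1 * beta) * al + 2%:R * (- al^-1 * beta) * beta
   = - (al^-1 * beta ^+ 2) by field; rewrite gt_eqF.
lra.
Qed.


Definition Tk n (T : 'M[R]_n) (K : {set 'I_n}) : 'M[R]_n :=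
  \matrix_(i, j) if (i \in K) && (j \in K) then T i j else (i == j)%:R.

Lemma det_expand n (s : R) (T : 'M[R]_n) :
  \det (s%:M + T) = \sum_(K : {set 'I_n}) s ^+ #|~: K| * \det (Tk T K).
Proof.
rewrite /determinant.
transitivity (\sum_(p : 'S_n) \sum_(K : {set 'I_n}) (-1) ^+ p *
   \prod_i (if i \in K then T i (p i) else s *+ (i == p i))).
  apply: eq_bigr => p _; rewrite -big_distrr /=; congr (_ * _).
  under eq_bigr => i _ do rewrite !mxE addrC.
  by rewrite bigA_distr.
rewrite exchange_big; apply: eq_bigr => K _ /=.
rewrite big_distrr; apply: eq_bigr => p _ /=.
rewrite mulrCA; congr (_ * _).
have [fx|nfx] := boolP [forall i in ~: K, p i == i].
  have fx' : forall i, i \notin K -> p i = i.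
    by move=> i iK; apply/eqP; move/forall_inP: fx; apply; rewrite inE.
  have inK : forall i, i \in K -> p i \in K.
    move=> i iK; apply: contraT => siK.
    have := fx' _ siK => /perm_inj eq; by move: iK; rewrite -eq (negPf siK).
  rewrite (bigID (mem K)) [X in _ = _ * X](bigID (mem K)) /=.
  rewrite mulrCA; congr (_ * _).
    by apply: eq_bigr => i iK; rewrite mxE iK inK.
  rewrite [X in _ = _ * X]big1 ?mulr1; last first.
    by move=> i iK; rewrite mxE (negPf iK) fx' // eqxx.
  rewrite -prodr_const; apply: eq_big => i; first by rewrite inE.
  by move=> iK; rewrite (negPf iK) fx' // eqxx.
have [i /andP [iK ne]] : exists i, (i \in ~: K) && (p i != i).
  move/forall_inPn: nfx => [i iK ne]; by exists i; rewrite iK.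
rewrite inE in iK.
rewrite (bigD1 i) //= (negPf iK) eq_sym (negPf ne) mulr0n mul0r.
by rewrite (bigD1 i) //= mxE (negPf iK) eq_sym (negPf ne) mul0r mulr0.
Qed.


Lemma psd_congr n (T G : 'M[R]_n) : psd T -> psd (G^T *m T *m G).
Proof.
move=> [Ts Tp]; split.
  by rewrite !trmx_mul trmxK Ts mulmxA.
move=> u; have := Tp (u *m G^T).
by rewrite trmx_mul trmxK !mulmxA.
Qed.

Lemma psd_add n (A B : 'M[R]_n) : psd A -> psd B -> psd (A + B).
Proof.
move=> [As Ap] [Bs Bp]; split; first by rewrite linearD /= As Bs.
by move=> u; rewrite mulmxDr mulmxDl mxE addr_ge0.
Qed.

Lemma psd_scale n c (A : 'M[R]_n) : 0 <= c -> psd A -> psd (c *: A).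
Proof.
move=> c0 [As Ap]; split; first by rewrite linearZ /= As.
by move=> u; rewrite -scalemxAr -scalemxAl mxE mulr_ge0.
Qed.

Lemma psd_diag n (d : 'rV[R]_n) : (forall i, 0 <= d 0 i) -> psd (diag_mx d).
Proof.
move=> d0; split; first exact: tr_diag_mx.
move=> u; rewrite mul_mx_diag mxE; apply: sumr_ge0 => i _.
by rewrite !mxE mulrAC -expr2 mulr_ge0 ?sqr_ge0.
Qed.

Definition projK n (K : {set 'I_n}) : 'M[R]_n := diag_mx (\row_i (i \in K)%:R).

Lemma Tk_decomp n (T : 'M[R]_n) K :
  Tk T K = (projK K)^T *m T *m projK K + diag_mx (\row_i (i \notin K)%:R).
Proof.
apply/matrixP => i j; rewrite /projK tr_diag_mx mul_diag_mx mul_mx_diag !mxE.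
case: (boolP (i \in K)) => iK; case: (boolP (j \in K)) => jK /=;
  rewrite ?mul1r ?mulr1 ?mul0r ?mulr0 ?add0r ?addr0 ?mul0rn ?addr0 ?add0r //.
by case: eqP => // eij; rewrite eij (negPf jK) in iK.
Qed.

Lemma psd_Tk n (T : 'M[R]_n) K : psd T -> psd (Tk T K).
Proof.
move=> Tp; rewrite Tk_decomp; apply: psd_add; first exact: psd_congr.
by apply: psd_diag => i; rewrite mxE ler0n.
Qed.


Definition csq (rho : R) (s : nat) : R := if s == 0%N then 1 else 1 - rho ^+ 2.
Definition Lar n (rho : R) : 'M[R]_n :=
  \matrix_(i, k) if (k <= i)%N then rho ^+ (i - k) else 0.

Lemma geom_csq rho m : \sum_(s < m.+1) rho ^+ (2 * (m - s)) * csq rho s = 1.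
Proof.
elim: m => [|m IH]; first by rewrite big_ord1 /csq /= mul1r.
rewrite big_ord_recr /= subnn muln0 expr0 mul1r.
have E : \sum_(s < m.+1) rho ^+ (2 * (m.+1 - s)) * csq rho s =
    rho ^+ 2 * \sum_(s < m.+1) rho ^+ (2 * (m - s)) * csq rho s.
  rewrite big_distrr; apply: eq_bigr => s _ /=; rewrite mulrA -exprD.
  congr (_ ^+ _ * _); have := ltn_ord s; lia.
by rewrite E IH mulr1 /csq /= addrC subrK.
Qed.

Lemma AR_factor n (rho : R) (i k : 'I_n) :
  (Lar n rho *m diag_mx (\row_s csq rho s) *m (Lar n rho)^T) i k
  = rho ^+ (maxn i k - minn i k).
Proof.
rewrite mul_mx_diag mxE.
set m := minn i k.
have Hm : (m < n)%N by rewrite /m gtn_min ltn_ord.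
transitivity (\sum_(s < n) if (s < m.+1)%N then
   rho ^+ (maxn i k - minn i k) * (rho ^+ (2 * (m - s)) * csq rho s) else 0).
  apply: eq_bigr => s _; rewrite !mxE.
  have [Hs|Hs] := boolP (s < m.+1)%N.
    have [si sk] : (s <= i)%N /\ (s <= k)%N by move: Hs; rewrite /m; lia.
    rewrite si sk mulrAC -exprD mulrA -exprD; congr (_ ^+ _ * _).
    rewrite /m; lia.
  idtac.
  have : ~~ ((s <= i)%N && (s <= k)%N) by move: Hs; rewrite /m; lia.
  by case/nandP => /negPf ->; rewrite ?mul0r ?mulr0.
rewrite -big_mkcond /= -(big_ord_widen _ (fun s => rho ^+ (maxn i k - minn i k) *
   (rho ^+ (2 * (m - s)) * csq rho s))) //.
by rewrite -big_distrr /= geom_csq mulr1.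
Qed.

End PSD.

Section Main.
Variables (R : realType) (J : nat) (se2 sg2 rho : R).
Hypotheses (se0 : 0 < se2) (sg0 : 0 < sg2) (rho0 : 0 <= rho) (rho1 : rho <= 1).

Let S : 'M[R]_J := Sigma_gamma J sg2 rho.

Lemma S_psd : psd S.
Proof.
have -> : S = sg2 *: (((Lar J rho)^T)^T *m diag_mx (\row_s csq rho s) *m (Lar J rho)^T).
  by apply/matrixP => i k; rewrite trmxK [RHS]mxE AR_factor !mxE.
apply: psd_scale; first exact: ltW.
apply: psd_congr; apply: psd_diag => s; rewrite mxE /csq.
case: (s == 0%N :> nat) => //; rewrite subr_ge0 expr_le1 //.
Qed.

Lemma S_rev (i k : 'I_J) : S (rev_ord i) (rev_ord k) = S i k.
Proof.
rewrite !mxE; congr (_ * _ ^+ _).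
case: i k => [i Hi] [k Hk] /=; lia.
Qed.

Definition Dh (x : 'I_J -> R) : 'M[R]_J := M0half x.
Definition Nm (x : 'I_J -> R) : 'M[R]_J := se2%:M + Dh x *m S *m Dh x.

Lemma DSD_entry x i k : (Dh x *m S *m Dh x) i k = Num.sqrt (x i) * S i k * Num.sqrt (x k).
Proof. by rewrite /Dh /M0half mul_diag_mx mul_mx_diag !mxE. Qed.

Lemma Tk_scale x K : (forall i, 0 <= x i) ->
  \det (Tk (Dh x *m S *m Dh x) K) = (\prod_(i in K) x i) * \det (Tk S K).
Proof.
move=> x0.
pose E : 'M[R]_J := diag_mx (\row_i if i \in K then Num.sqrt (x i) else 1).
have -> : Tk (Dh x *m S *m Dh x) K = E *m Tk S K *m E.
  apply/matrixP => i j; rewrite [LHS]mxE DSD_entry mul_diag_mx mul_mx_diag !mxE.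
  case: (boolP (i \in K)) => iK; case: (boolP (j \in K)) => jK /=;
    rewrite ?mul1r ?mulr1 ?mul0r ?mulr0 //.
    by case: eqP => [eij|_]; [rewrite eij (negPf jK) in iK | rewrite mulr0].
  by case: eqP => [eij|_]; [rewrite eij jK in iK | rewrite mul0r].
rewrite !det_mulmx det_diag mulrC mulrA -expr2; congr (_ * _).
rewrite -prodrXl [RHS]big_mkcond /=; apply: eq_bigr => i _; rewrite mxE.
case: (i \in K) => //; [exact: sqr_sqrtr | exact: expr1n].
Qed.

Lemma detN x : (forall i, 0 <= x i) ->
  \det (Nm x) = \sum_(K : {set 'I_J}) se2 ^+ #|~: K| * ((\prod_(i in K) x i) * \det (Tk S K)).
Proof.
move=> x0; rewrite /Nm det_expand; apply: eq_bigr => K _; by rewrite Tk_scale.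
Qed.


Definition hinv (U : {set 'I_J}) (x : 'I_J -> R) := \prod_(i in U) (x i)^-1.
Definition F (x : 'I_J -> R) :=
  \sum_(K : {set 'I_J}) se2 ^+ #|~: K| * \det (Tk S K) * hinv (~: K) x.

Lemma detN_F x : (forall i, 0 < x i) -> \det (Nm x) = (\prod_i x i) * F x.
Proof.
move=> xp; rewrite detN => [|i]; last exact: ltW.
rewrite /F big_distrr; apply: eq_bigr => K _ /=.
have -> : \prod_i x i = (\prod_(i in K) x i) * \prod_(i in ~: K) x i.
  rewrite (bigID (mem K)) /=; congr (_ * _); apply: eq_bigl => i; by rewrite inE.
rewrite /hinv prodfV.
have nz : \prod_(i in ~: K) x i != 0 by rewrite gt_eqF // prodr_gt0.
by field.
Qed.

Lemma Tk0 : Tk S (@finset.set0 'I_J) = 1%:M.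
Proof. by apply/matrixP => i j; rewrite !mxE finset.in_set0. Qed.

Lemma detTk_ge0 K : 0 <= \det (Tk S K).
Proof. exact/psd_det_ge0/psd_Tk/S_psd. Qed.

Lemma hinv_gt0 U x : (forall i, 0 < x i) -> 0 < hinv U x.
Proof. by move=> xp; apply: prodr_gt0 => i _; rewrite invr_gt0. Qed.

Lemma F_pos x : (forall i, 0 < x i) -> 0 < F x.
Proof.
move=> xp; rewrite /F (bigD1 (@finset.set0 'I_J)) //= Tk0 det1 mulr1.
have h1 : 0 < se2 ^+ #|~: (@finset.set0 'I_J)| * hinv (~: (@finset.set0 'I_J)) x.
  by apply: mulr_gt0; [exact: exprn_gt0 | exact: hinv_gt0].
have h2 : 0 <= \sum_(K | K != (@finset.set0 'I_J)) se2 ^+ #|~: K| * \det (Tk S K) * hinv (~: K) x.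
  apply: sumr_ge0 => K _; apply: mulr_ge0; last exact/ltW/hinv_gt0.
  by apply: mulr_ge0; [exact/exprn_ge0/ltW | exact: detTk_ge0].
by apply: (lt_le_trans h1); rewrite lerDl.
Qed.

Lemma detMinfo (A : 'M[R]_J) x : (forall i, 0 < x i) ->
  \det (Minfo A se2 sg2 rho x) = \det A ^+ 2 / F x.
Proof.
move=> xp.
have -> : Minfo A se2 sg2 rho x = A^T *m Dh x *m invmx (Nm x) *m Dh x *m A by [].
rewrite !det_mulmx det_tr det_inv detN_F // /Dh /M0half det_diag.
set P := \prod_i _.
have HP : \prod_i x i = P ^+ 2.
  rewrite /P -prodrXl; apply: eq_bigr => i _; rewrite mxE sqr_sqrtr //; exact: ltW.
have Fnz : F x != 0 by rewrite gt_eqF // F_pos.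
have Pnz : P != 0.
  have h : 0 < P ^+ 2 by rewrite -HP prodr_gt0.
  by apply: contraTneq h => ->; rewrite expr0n /= ltxx.
by rewrite HP; field; rewrite Fnz Pnz.
Qed.

Lemma Nm_entry x i j :
  Nm x i j = se2 *+ (i == j) + Num.sqrt (x i) * S i j * Num.sqrt (x j).
Proof. by rewrite /Nm [LHS]mxE DSD_entry [in X in X + _ = _]mxE. Qed.

Lemma N_rev x : \det (Nm (fun i => x (rev_ord i))) = \det (Nm x).
Proof.
set s := perm (@rev_ord_inj J).
have -> : Nm (fun i => x (rev_ord i)) = row_perm s (col_perm s (Nm x)).
  apply/matrixP => i j; rewrite [RHS]mxE [RHS]mxE !Nm_entry !permE S_rev.
  by rewrite (inj_eq rev_ord_inj).
rewrite row_permE col_permE !det_mulmx !det_perm odd_permV.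
by rewrite mulrCA -expr2 sqrr_sign mulr1.
Qed.

Lemma F_rev x : (forall i, 0 < x i) -> F (fun i => x (rev_ord i)) = F x.
Proof.
move=> xp.
have xp' : forall i, 0 < x (rev_ord i) by move=> i; exact: xp.
have := N_rev x; rewrite !detN_F //.
have -> : \prod_i x (rev_ord i) = \prod_i x i.
  by rewrite [RHS](reindex_inj rev_ord_inj).
apply: mulfI; rewrite gt_eqF // prodr_gt0 //.
Qed.


Definition mid (x y : 'I_J -> R) := fun i => (x i + y i) / 2%:R.

Lemma inv_mid (a b : R) : 0 < a -> 0 < b ->
  a^-1 * b^-1 - ((a + b) / 2%:R)^-1 ^+ 2 = (a - b) ^+ 2 / (a * b * (a + b) ^+ 2).
Proof.
move=> a0 b0; have ab : a + b != 0 by rewrite gt_eqF // addr_gt0.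
by field; rewrite ab (gt_eqF a0) (gt_eqF b0).
Qed.

Lemma amgm (h X Y : R) : 0 < h -> 0 < X -> 0 < Y -> h ^+ 2 <= X * Y -> 2%:R * h <= X + Y.
Proof.
move=> h0 X0 Y0 H; have := sqr_ge0 (X - Y); nra.
Qed.

Lemma amgm_lt (h X Y : R) : 0 < h -> 0 < X -> 0 < Y -> h ^+ 2 < X * Y -> 2%:R * h < X + Y.
Proof.
move=> h0 X0 Y0 H; have := sqr_ge0 (X - Y); nra.
Qed.

Lemma hconv U x y : (forall i, 0 < x i) -> (forall i, 0 < y i) ->
  2%:R * hinv U (mid x y) <= hinv U x + hinv U y.
Proof.
move=> xp yp.
have mp : forall i, 0 < mid x y i by move=> i; rewrite /mid divr_gt0 ?addr_gt0.
apply: amgm; rewrite ?hinv_gt0 //.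
rewrite /hinv -prodrXl -big_split /=; apply: ler_prod => i _.
rewrite sqr_ge0 /= -subr_ge0 /mid inv_mid //.
by rewrite divr_ge0 ?sqr_ge0 // mulr_ge0 ?sqr_ge0 // mulr_ge0 // ltW.
Qed.

Lemma hconv_lt x y j : (forall i, 0 < x i) -> (forall i, 0 < y i) -> x j != y j ->
  2%:R * hinv [set: 'I_J] (mid x y) < hinv [set: 'I_J] x + hinv [set: 'I_J] y.
Proof.
move=> xp yp nej.
have mp : forall i, 0 < mid x y i by move=> i; rewrite /mid divr_gt0 ?addr_gt0.
apply: amgm_lt; rewrite ?hinv_gt0 //.
rewrite /hinv -prodrXl -big_split /=.
rewrite (bigD1 j) ?inE //= [X in _ < X](bigD1 j) ?inE //=.
have le : forall i, 0 <= (mid x y i)^-1 ^+ 2 <= (x i)^-1 * (y i)^-1.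
  move=> i; rewrite sqr_ge0 /= -subr_ge0 /mid inv_mid //.
  by rewrite divr_ge0 ?sqr_ge0 // mulr_ge0 ?sqr_ge0 // mulr_ge0 // ltW.
have ltj : (mid x y j)^-1 ^+ 2 < (x j)^-1 * (y j)^-1.
  rewrite -subr_gt0 /mid inv_mid // divr_gt0 //.
    by rewrite lt_def sqr_ge0 andbT sqrf_eq0 subr_eq0.
  by rewrite mulr_gt0 ?exprn_gt0 ?addr_gt0 // mulr_gt0.
set P1 := \prod_(i in [set: 'I_J] | i != j) _.
set P2 := \prod_(i in [set: 'I_J] | i != j) _.
have P1P2 : P1 <= P2 by apply: ler_prod => i _; exact: le.
have P20 : 0 < P2 by apply: prodr_gt0 => i _; rewrite mulr_gt0 ?invr_gt0.
apply: (le_lt_trans (y := (mid x y j)^-1 ^+ 2 * P2)).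
  by rewrite ler_wpM2l ?sqr_ge0.
by rewrite ltr_pM2r.
Qed.

Lemma F_conv x y j : (forall i, 0 < x i) -> (forall i, 0 < y i) -> x j != y j ->
  2%:R * F (mid x y) < F x + F y.
Proof.
move=> xp yp nej.
rewrite /F -big_split big_distrr /=.
rewrite (bigD1 (@finset.set0 'I_J)) //= [X in _ < X](bigD1 (@finset.set0 'I_J)) //=.
apply: ltr_leD.
  rewrite Tk0 det1 mulr1 finset.setC0 mulrCA -mulrDr ltr_pM2l ?exprn_gt0 //.
  exact: hconv_lt nej.
apply: ler_sum => K _.
rewrite mulrCA -mulrDr ler_wpM2l ?hconv //.
by apply: mulr_ge0; [exact/exprn_ge0/ltW | exact: detTk_ge0].
Qed.


Lemma design_mid (I : R) (x y : 'I_J -> R) : is_design I x -> is_design I y -> is_design I (mid x y).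
Proof.
move=> [x0 xs] [y0 ys]; split.
  by move=> i; rewrite /mid divr_ge0 ?addr_ge0.
rewrite /mid -mulr_suml big_split /= xs ys.
by field.
Qed.

Lemma design_rev (I : R) (x : 'I_J -> R) : is_design I x -> is_design I (fun i => x (rev_ord i)).
Proof.
move=> [x0 xs]; split => //.
by rewrite -xs [RHS](reindex_inj rev_ord_inj).
Qed.

Lemma detM0 (x : 'I_J -> R) : \det (M0 x) = \prod_i x i.
Proof. by rewrite /M0 det_diag; apply: eq_bigr => i _; rewrite mxE. Qed.

Lemma estimable_pos (I : R) (A : 'M[R]_J) (x : 'I_J -> R) :
  is_design I x -> estimable A x -> forall i, 0 < x i.
Proof.
move=> [x0 _] [rA sub] i.
have : \rank (M0 x)^T = J.
  apply/eqP; rewrite eqn_leq rank_leq_col /= -{1}rA -mxrank_tr.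
  exact: mxrankS.
move/eqP; rewrite -[_ == J]/(row_full _) row_full_unit unitmxE det_tr detM0 unitfE.
move=> nz; rewrite lt_def x0 andbT.
apply: contraNneq nz => xi0.
by rewrite (bigD1 i) //= xi0 mul0r.
Qed.

Lemma pos_estimable (A : 'M[R]_J) x :
  A \in unitmx -> (forall i, 0 < x i) -> estimable A x.
Proof.
move=> Au xp; split; first exact: mxrank_unit.
apply: submx_full; rewrite row_full_unit unitmxE det_tr detM0 unitfE.
by rewrite gt_eqF // prodr_gt0.
Qed.

Lemma main_sec (I : R) (A : 'M[R]_J) (xi : 'I_J -> R) :
  A \in unitmx -> D_optimal A se2 sg2 rho I xi -> forall j, xi j = xi (rev_ord j).
Proof.
move=> Au [xd xe xopt] j.
have xp := estimable_pos xd xe.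
pose y := fun i => xi (rev_ord i).
have yp : forall i, 0 < y i by move=> i; exact: xp.
have yd : is_design I y := design_rev xd.
pose m := mid xi y.
have md : is_design I m := design_mid xd yd.
have mp : forall i, 0 < m i by move=> i; rewrite /m /mid divr_gt0 ?addr_gt0.
have me := pos_estimable Au mp.
have dA : 0 < \det A ^+ 2.
  move: Au; rewrite unitmxE unitfE => dnz.
  by rewrite lt_def sqr_ge0 andbT expf_neq0.
have := xopt m md me.
rewrite ler_ln ?posrE ?detMinfo ?divr_gt0 ?F_pos //.
rewrite ler_pM2l // lef_pV2 ?posrE ?F_pos // => Hle.
apply/eqP; apply: contraT => ne.
have := F_conv xp yp ne; rewrite /y F_rev // -/m => H.
lra.
Qed.

End Main.

Theorem lemma5 (R : realType) (J : nat) (se2 sg2 rho I : R) (A : 'M[R]_J)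
  (xi : 'I_J -> R) :
  (0 < J)%N -> 0 < se2 -> 0 < sg2 -> 0 <= rho <= 1 ->
  A \in unitmx -> 0 < I ->
  D_optimal A se2 sg2 rho I xi ->
  forall j : 'I_J, xi j = xi (rev_ord j).
Proof.
move=> _ se0 sg0 /andP [r0 r1] Au _ opt.
exact: (main_sec se0 sg0 r0 r1 Au opt).
Qed.
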